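(* For all $m,d\ge1$, the polynomial $P_d(x_1,\dots,x_m)$ can be computed by a non-commutative UPT circuit of size $O(m^2d)$.
   Context: Let $T_d$ be the complete binary tree of depth $d$ ($2^d$ leaves, $D=2^{d+1}-1$ nodes), with nodes $v_1,\dots,v_D$ listed in in-order (left subtree recursively, root, right subtree recursively). A colouring $\gamma:T_d\to\mathbb{Z}_m$ is legal if for every internal node $u$ with children $v,w$, $\gamma(u)=\gamma(v)+\gamma(w)\bmod m$. Identify $\mathbb{Z}_m$ with $\{1,\dots,m\}$. $P_d(x_1,\dots,x_m)=\sum_{\gamma\text{ legal}}x_{\gamma(v_1)}\cdots x_{\gamma(v_D)}\in\mathbb{F}\langle x_1,\dots,x_m\rangle$. A non-commutative circuit is a DAG with one output, leaves variables or constants, $+$ gates and $\times$ gates with ordered children; a parse tree keeps all children of $\times$ gates and exactly one child of each $+$ gate; a circuit computing a homogeneous polynomial is UPT if all parse trees have the same shape (ordered rooted tree with $+/\times$ labels, forgetting gate names). *)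

(* Defs.v *)
From HB Require Import structures.
From mathcomp Require Import all_boot all_order all_algebra.
From Stdlib Require Lists.List.
Set Implicit Arguments. Unset Strict Implicit. Unset Printing Implicit Defensive.
Import GRing.Theory.
Local Open Scope ring_scope.

(* Non-commutative polynomials in x_1..x_m over F, given by their      *)
(* coefficient function on words (variable x_{j+1} <-> j : 'I_m).      *)
Definition ncpoly (m : nat) (F : fieldType) := seq 'I_m -> F.

Section NCPoly.
Variables (m : nat) (F : fieldType).

Definition nc0 : ncpoly m F := fun _ => 0.
Definition nc1 : ncpoly m F := fun w => if w is [::] then 1 else 0.
Definition ncconst (c : F) : ncpoly m F := fun w => if w is [::] then c else 0.
Definition ncvar (i : 'I_m) : ncpoly m F := fun w => if w == [:: i] then 1 else 0.
Definition ncadd (p q : ncpoly m F) : ncpoly m F := fun w => p w + q w.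
Definition ncmul (p q : ncpoly m F) : ncpoly m F :=
  fun w => \sum_(i < (size w).+1) p (take i w) * q (drop i w).
End NCPoly.

(* The complete binary tree T_d, nodes numbered 0..D-1 in in-order.    *)
(* number of nodes D = 2^(d+1) - 1 *)
Fixpoint tsize (d : nat) : nat := if d is d'.+1 then (tsize d').*2.+1 else 1.
Definition troot (d : nat) : nat := if d is d'.+1 then tsize d' else 0.
(* triples (parent, left child, right child) of internal nodes of T_d,
   in-order indices shifted by off: T_{d+1} = T_d (left), root, T_d (right) *)
Fixpoint tedges (d off : nat) : seq (nat * nat * nat) :=
  if d is d'.+1 then
    (off + tsize d', off + troot d', off + tsize d' + 1 + troot d')
      :: tedges d' off ++ tedges d' (off + tsize d' + 1)
  else [::].

(* A colouring gamma : T_d -> Z_m, given as the sequence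
   (gamma(v_1), ..., gamma(v_D)) of in-order colours; Z_m = 'I_m. *)
Definition legal (m d : nat) (g : (tsize d).-tuple 'I_m) : bool :=
  let s := map val g in
  all (fun e : nat * nat * nat =>
         let: (u, v, w) := e in nth 0%N s u == ((nth 0%N s v + nth 0%N s w) %% m)%N)
      (tedges d 0).

(* Z_m identified with {1,..,m} (residue 0 <-> m, residue c <-> c); colour
   c thus gives variable x_c, whose index (in 'I_m, shifted by one) is: *)
Definition colvar (m c : nat) : nat := if c == 0%N then m.-1 else c.-1.

(* P_d = sum over legal gamma of x_{gamma(v_1)} ... x_{gamma(v_D)}:
   coefficient of the word w = number of legal gamma producing w. *)
Definition Pd (F : fieldType) (m d : nat) : ncpoly m F :=
  fun w => (#|[set g : (tsize d).-tuple 'I_m |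
                 legal g && (map (colvar m) (map val g) == map val w)]|)%:R.

(* Non-commutative circuits: a list of gates in topological order;     *)
(* children are referred to by their (strictly smaller) position;      *)
Inductive gate (m : nat) (F : Type) :=
| GVar of 'I_m
| GConst of F
| GAdd of seq nat
| GMul of seq nat.

Arguments GVar {m F}. Arguments GConst {m F}. Arguments GAdd {m F}. Arguments GMul {m F}.

Definition children (m : nat) (F : Type) (g : gate m F) : seq nat :=
  match g with GAdd cs | GMul cs => cs | _ => [::] end.

Definition wf_circuit (m : nat) (F : Type) (C : seq (gate m F)) : Prop :=
  C <> [::] /\
  forall k, (k < size C)%N ->
    forall j, j \in children (nth (GAdd [::]) C k) -> (j < k)%N.

Definition csize (m : nat) (F : Type) (C : seq (gate m F)) : nat :=
  (size C + sumn (map (fun g => size (children g)) C))%N.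

Section Eval.
Variables (m : nat) (F : fieldType).

Definition eval_gate (vs : seq (ncpoly m F)) (g : gate m F) : ncpoly m F :=
  match g with
  | GVar i => @ncvar m F i
  | GConst c => @ncconst m F c
  | GAdd cs => foldr (@ncadd m F) (@nc0 m F) [seq nth (@nc0 m F) vs j | j <- cs]
  | GMul cs => foldr (@ncmul m F) (@nc1 m F) [seq nth (@nc0 m F) vs j | j <- cs]
  end.

Definition evals (C : seq (gate m F)) : seq (ncpoly m F) :=
  foldl (fun vs g => rcons vs (eval_gate vs g)) [::] C.

Definition output (C : seq (gate m F)) : ncpoly m F := last (@nc0 m F) (evals C).
End Eval.

(* Shapes of parse trees: ordered rooted trees with +/x labels on      *)
(* internal nodes (leaves unlabelled, gate names forgotten).           *)
Inductive shape :=
| SLeaf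
| SAdd of shape          (* a + gate keeps exactly one child *)
| SMul of seq shape.     (* a x gate keeps all its children, in order *)

Definition choices (A : Type) (Ss : seq (seq A)) : seq (seq A) :=
  foldr (fun S acc => flatten [seq [seq s :: t | t <- acc] | s <- S]) [:: [::]] Ss.

Section Shapes.
Variables (m : nat) (F : Type).

Definition shapes_gate (ss : seq (seq shape)) (g : gate m F) : seq shape :=
  match g with
  | GVar _ | GConst _ => [:: SLeaf]
  | GAdd cs => flatten [seq [seq SAdd s | s <- nth [::] ss j] | j <- cs]
  | GMul cs => [seq SMul l | l <- choices [seq nth [::] ss j | j <- cs]]
  end.

Definition all_shapes (C : seq (gate m F)) : seq (seq shape) :=
  foldl (fun ss g => rcons ss (shapes_gate ss g)) [::] C.

Definition parse_shapes (C : seq (gate m F)) : seq shape := last [::] (all_shapes C).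

Definition UPT (C : seq (gate m F)) : Prop :=
  forall s t, Stdlib.Lists.List.In s (parse_shapes C) -> Stdlib.Lists.List.In t (parse_shapes C) -> s = t.
End Shapes.

(* Main.v *)
Require Import Defs.
From mathcomp Require Import all_boot all_order all_algebra zify.
Require Import Defs.
Set Implicit Arguments. Unset Strict Implicit. Unset Printing Implicit Defensive.
Import GRing.Theory.
Local Open Scope ring_scope.

Local Close Scope ring_scope.
Section Run.
Variables (A G : Type) (f : seq A -> G -> A).
Definition step (vs : seq A) (g : G) := rcons vs (f vs g).
Definition run (C : seq G) := foldl step [::] C.

Lemma foldl_step_pref acc C : exists X, foldl step acc C = acc ++ X.
Proof.
elim: C acc => [|g C IH] acc /=; first by exists [::]; rewrite cats0.
have [X ->] := IH (rcons acc (f acc g)); exists (f acc g :: X).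
by rewrite -cats1 -catA.
Qed.

Lemma size_run C : size (run C) = size C.
Proof.
elim/last_ind: C => [|C g IH] //; by rewrite /run -cats1 foldl_cat /= /step size_rcons size_cat IH addn1.
Qed.

Lemma run_nth a0 g0 C i : i < size C ->
  nth a0 (run C) i = f (take i (run C)) (nth g0 C i).
Proof.
move=> Hi.
have E : C = take i C ++ nth g0 C i :: drop i.+1 C by rewrite -drop_nth // cat_take_drop.
have Hs : size (run (take i C)) = i by rewrite size_run size_takel // ltnW.
have [X HX] := foldl_step_pref (step (run (take i C)) (nth g0 C i)) (drop i.+1 C).
have HR : run C = rcons (run (take i C)) (f (run (take i C)) (nth g0 C i)) ++ X.
  by rewrite {1}E /run foldl_cat /= -HX.
rewrite HR -cats1 -catA take_size_cat // nth_cat Hs ltnn subnn.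
by [].
Qed.
End Run.

Lemma In_cat (T : Type) (y : T) (s1 s2 : seq T) : List.In y (s1 ++ s2) -> List.In y s1 \/ List.In y s2.
Proof. elim: s1 => [|x s IH] /=; first by right. move=> [->|H]; first by left; left. case: (IH H); tauto. Qed.

Lemma In_map (T U : Type) (h : T -> U) y (s : seq T) : List.In y (map h s) -> exists x, List.In x s /\ y = h x.
Proof. elim: s => [|x s IH] //= [<-|H]; first by exists x; auto. have [z [H1 H2]] := IH H. by exists z; auto. Qed.

Lemma In_flatten (T : Type) (y : T) (ss : seq (seq T)) : List.In y (flatten ss) -> exists s, List.In s ss /\ List.In y s.
Proof.
elim: ss => [|s ss IH] //= H; case: (In_cat H) => [H1|H1]; first by exists s; auto.
have [t [H2 H3]] := IH H1; by exists t; auto.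
Qed.

Local Open Scope ring_scope.
Section NCL.
Variables (m : nat) (F : fieldType).
Implicit Types p q : ncpoly m F.

Definition supp p (L : nat) := forall u, size u != L -> p u = 0.

Lemma ncmul_sup p q L w : supp p L ->
  ncmul p q w = if (L <= size w)%N then p (take L w) * q (drop L w) else 0.
Proof.
move=> Hp; rewrite /ncmul; case: leqP => HL.
- have HL' : (L < (size w).+1)%N by [].
  rewrite (bigD1 (Ordinal HL')) //= big1 ?addr0 // => i /eqP Hi.
  rewrite Hp ?mul0r // size_takel; last by have := ltn_ord i.
  apply/eqP => E; apply: Hi; apply: val_inj; by rewrite /= E.
- rewrite big1 // => i _; rewrite Hp ?mul0r // size_take.
  have := ltn_ord i; case: ifP => _ ?; apply/eqP; lia.
Qed.

Lemma ncmul_p1 p w : ncmul p (@nc1 m F) w = p w.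
Proof.
rewrite /ncmul big_ord_recr /= drop_size take_size /= mulr1 big1 ?add0r // => i _.
rewrite /nc1; case E: (drop i w) => [|? ?]; last by rewrite mulr0.
have := ltn_ord i; have := size_drop i w; rewrite E /=; lia.
Qed.

Lemma ncmul_supp p q L1 L2 : supp p L1 -> supp q L2 -> supp (ncmul p q) (L1 + L2).
Proof.
move=> Hp Hq u Hu; rewrite (ncmul_sup _ _ Hp); case: ifP => // H.
rewrite Hq ?mulr0 // size_drop; apply/eqP; move: Hu => /eqP; lia.
Qed.

Lemma supp_p1 p L : supp p L -> supp (ncmul p (@nc1 m F)) L.
Proof. by move=> H u Hu; rewrite ncmul_p1 H. Qed.

Lemma ncmul_ext p1 p2 q1 q2 : p1 =1 p2 -> q1 =1 q2 -> ncmul p1 q1 =1 ncmul p2 q2.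
Proof. by move=> H1 H2 w; apply: eq_bigr => i _; rewrite H1 H2. Qed.

Lemma foldr_add (I : Type) (f : I -> ncpoly m F) s w :
  foldr (@ncadd m F) (@nc0 m F) (map f s) w = \sum_(x <- s) f x w.
Proof. by elim: s => [|x s IH]; rewrite ?big_nil ?big_cons //= /ncadd IH. Qed.
End NCL.
Set Implicit Arguments. Unset Strict Implicit. Unset Printing Implicit Defensive.

Local Close Scope ring_scope.

Definition shE (o : nat) (e : nat * nat * nat) : nat * nat * nat :=
  let: (u, v, w) := e in (o + u, o + v, o + w).

Lemma tedgesS d off : tedges d.+1 off =
  (off + tsize d, off + troot d, off + tsize d + 1 + troot d)%N
    :: tedges d off ++ tedges d (off + tsize d + 1)%N.
Proof. by []. Qed.

Lemma tedges_shift d off : tedges d off = map (shE off) (tedges d 0).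
Proof.
elim: d off => [|d IH] off //.
rewrite !tedgesS /= !add0n map_cat IH (IH (tsize d + 1)) -map_comp; congr (_ :: _ ++ _).
  by rewrite !addnA.
rewrite IH; by apply: eq_map => -[[u v] w] /=; rewrite !addnA.
Qed.

Lemma troot_lt d : troot d < tsize d.
Proof. case: d => //= d; lia. Qed.

Definition inb (n : nat) (e : nat * nat * nat) : bool :=
  let: (u, v, w) := e in [&& u < n, v < n & w < n].

Lemma tedges_bound d : all (inb (tsize d)) (tedges d 0).
Proof.
elim: d => [|d IH] //.
rewrite tedgesS (tedges_shift d (0 + tsize d + 1)) !add0n /= all_cat all_map /=.
have := troot_lt d => Ht.
apply/andP; split; first by apply/and3P; split; lia.
apply/andP; split.
  apply: sub_all IH => [[[u v] w]] /= /and3P [H1 H2 H3]; apply/and3P; split; lia.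
apply: sub_all IH => [[[u v] w]] /= /and3P [H1 H2 H3]; apply/and3P; split; lia.
Qed.

Section Comb.
Variable m : nat.
Definition okE (s : seq nat) (e : nat * nat * nat) : bool :=
  let: (u, v, w) := e in nth 0%N s u == ((nth 0%N s v + nth 0%N s w) %% m)%N.
Definition legs d s := all (okE s) (tedges d 0).

Lemma legal_legs d (g : (tsize d).-tuple 'I_m) : legal g = legs d (map val g).
Proof. by []. Qed.

Lemma legs_cat k L y R : size L = tsize k ->
  legs k.+1 (L ++ y :: R) =
  [&& y == ((nth 0%N L (troot k) + nth 0%N R (troot k)) %% m)%N, legs k L & legs k R].
Proof.
move=> HL; rewrite /legs tedgesS (tedges_shift k (0 + tsize k + 1)) !add0n /= all_cat all_map.
have Ht := troot_lt k.
have N1 : forall u, u < tsize k -> nth 0%N (L ++ y :: R) u = nth 0%N L u.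
  by move=> u Hu; rewrite nth_cat HL Hu.
have N2 : forall u, nth 0%N (L ++ y :: R) (tsize k + 1 + u) = nth 0%N R u.
  move=> u; rewrite nth_cat HL ifF; last by apply/negbTE; lia.
  by have -> : (tsize k + 1 + u - tsize k = u.+1)%N by lia.
rewrite nth_cat HL ltnn subnn /= N1 // N2; congr (_ && (_ && _)).
  apply: eq_in_all => -[[u v] w] He /=.
  have := allP (tedges_bound k) _ He => /= /and3P [H1 H2 H3].
  by rewrite !N1.
by apply: eq_all => -[[u v] w] /=; rewrite !N2.
Qed.
End Comb.

Section Words.
Import GRing.Theory.
Local Open Scope ring_scope.
Variables (F : fieldType) (m0 : nat).
Local Notation m := m0.+1.

Definition col (x : 'I_m) : nat := (x.+1 %% m)%N.
Definition vc (c : nat) : 'I_m := inord (colvar m c).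
Definition Qw k c : ncpoly m F := fun w =>
  ((size w == tsize k) && legs m k (map col w) && (nth 0%N (map col w) (troot k) == c))%:R.
Definition bmod (c a : nat) : nat := ((c + m - a) %% m)%N.

Lemma col_lt x : (col x < m)%N.
Proof. exact: ltn_pmod. Qed.

Lemma colvar_col x : colvar m (col x) = x.
Proof.
rewrite /col /colvar; have := ltn_ord x; rewrite leq_eqVlt => /orP [/eqP E|H].
  have -> : (x.+1 %% m = 0)%N by rewrite E modnn.
  move: E => /= E; lia.
by rewrite modn_small.
Qed.

Lemma col_colvar v : (v < m)%N -> ((colvar m v).+1 %% m)%N = v.
Proof.
rewrite /colvar; case: eqP => [->|H] Hv; first by rewrite modnn.
rewrite prednK ?modn_small //; lia.
Qed.

Lemma col_vc c : (c < m)%N -> col (vc c) = c.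
Proof.
move=> Hc; rewrite /col /vc inordK ?col_colvar //.
rewrite /colvar; case: eqP => _ //=; lia.
Qed.

Lemma eq_vc c x : (c < m)%N -> (x == vc c) = (col x == c).
Proof.
move=> Hc; apply/eqP/eqP => [->|<-]; first by rewrite col_vc.
by rewrite /vc colvar_col inord_val.
Qed.

Lemma mod2 x : (x < m + m)%N -> (x %% m)%N = if (x < m)%N then x else (x - m)%N.
Proof.
case: ifP => H Hx; first by rewrite modn_small.
have -> : x = ((x - m) + m)%N by lia.
rewrite modnDr modn_small; lia.
Qed.

Lemma bmod_eq a b c : (a < m)%N -> (b < m)%N -> (c < m)%N ->
  (b == bmod c a) = (c == (a + b) %% m)%N.
Proof.
move=> Ha Hb Hc; rewrite /bmod !mod2; try lia.
by case: ifP => H1; case: ifP => H2; apply/eqP/eqP; lia.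
Qed.

Lemma Qw_supp k c : supp (Qw k c) (tsize k).
Proof. by move=> u /negbTE Hu; rewrite /Qw Hu. Qed.

Lemma ncvar_supp i : supp (@ncvar m F i) 1.
Proof.
move=> u Hu; rewrite /ncvar; case: eqP => // E; by rewrite E in Hu.
Qed.

Lemma Qw0 c w : (c < m)%N -> Qw 0 c w = @ncvar m F (vc c) w.
Proof.
move=> Hc; rewrite /Qw /ncvar; case: w => [|x [|y w]] //=.
  by rewrite eqseq_cons andbT eq_vc //; case: eqP.
by rewrite eqseq_cons andbF.
Qed.

Lemma b2F (b : bool) : (if b then 1 else 0 : F) = b%:R.
Proof. by case: b. Qed.

Lemma QwS k c w : (c < m)%N -> Qw k.+1 c w =
  \sum_(a < m) ncmul (Qw k a) (ncmul (@ncvar m F (vc c)) (ncmul (Qw k (bmod c a)) (@nc1 m F))) w.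
Proof.
move=> Hc.
have Hts : tsize k.+1 = (tsize k + (1 + tsize k))%N by rewrite /= -addnn; lia.
case: (eqVneq (size w) (tsize k.+1)) => Hw; last first.
  rewrite /Qw (negbTE Hw) /= big1 // => a _.
  have S := ncmul_supp (@Qw_supp k a) (ncmul_supp (@ncvar_supp (vc c)) (supp_p1 (@Qw_supp k (bmod c a)))).
  apply: S; by rewrite -Hts.
have [l [x [r [-> [Hl Hr]]]]] : exists l x r, w = l ++ x :: r /\ size l = tsize k /\ size r = tsize k.
  case E: (drop (tsize k) w) => [|x r].
    by have := size_drop (tsize k) w; rewrite E Hw Hts /=; lia.
  exists (take (tsize k) w), x, r; split; first by rewrite -E cat_take_drop.
  split; first by rewrite size_takel // Hw Hts; lia.
  by have := size_drop (tsize k) w; rewrite E Hw Hts /=; lia.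
under eq_bigr => a _ do
  rewrite (ncmul_sup _ _ (@Qw_supp k a)) size_cat Hl leq_addr take_size_cat //
    drop_size_cat // (ncmul_sup _ _ (ncvar_supp _)) /= take0 drop0 ncmul_p1.
have Hrt := troot_lt k.
set lr := nth 0%N (map col l) (troot k).
set rr := nth 0%N (map col r) (troot k).
have Hlr : (lr < m)%N by rewrite /lr (nth_map ord0) ?Hl // col_lt.
have Hrr : (rr < m)%N by rewrite /rr (nth_map ord0) ?Hr // col_lt.
rewrite (bigD1 (Ordinal Hlr)) //= big1; last first.
  move=> a /eqP Ha; rewrite /Qw -/lr.
  have -> : (lr == a) = false by apply/eqP => E; apply: Ha; apply: val_inj.
  by rewrite andbF mul0r.
have Hs : size (l ++ x :: r) == tsize k.+1 by rewrite Hts size_cat /= Hl Hr; apply/eqP; lia.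
rewrite addr0 /Qw -/lr -/rr Hl Hr eqxx Hs /=.
rewrite map_cat /= legs_cat ?size_map // -/lr -/rr nth_cat size_map Hl ltnn subnn /=.
rewrite /ncvar b2F eqseq_cons andbT eq_vc // bmod_eq //.
rewrite -!natrM !mulnb; congr (_%:R).
rewrite eqxx andbT; case: (col x =P c) => [->|_]; last by rewrite !andbF.
by case: (legs m k (map col l)); case: (legs m k (map col r)); case: (c == _).
Qed.

Lemma map_colvar (g w : seq 'I_m) :
  (map (colvar m) (map val g) == map val w) = (map val g == map col w).
Proof.
apply/eqP/eqP => [H|->]; last by rewrite -map_comp; apply/eq_map => x /=; rewrite colvar_col.
have := congr1 (map (fun n => (n.+1 %% m)%N)) H.
rewrite -!map_comp => E; rewrite -E; apply/eq_map => x /=.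
by rewrite col_colvar.
Qed.

Lemma Pd_Qw d w : @Pd F m d w = \sum_(c < m) Qw d c w.
Proof.
rewrite /Pd.
under eq_bigr => c _ do rewrite /Qw -mulnb natrM.
rewrite -big_distrr /=.
case H: ((size w == tsize d) && legs m d (map col w)); last first.
  rewrite mul0r; suff -> : [set g : (tsize d).-tuple 'I_m | legal g &&
      (map (colvar m) (map val g) == map val w)] = set0 by rewrite cards0.
  apply/setP => g; rewrite !inE map_colvar; apply/negbTE/negP => /andP [Hl /eqP E].
  have Hl' : legs m d (map val g) by rewrite -legal_legs.
  have Hsw : size w = tsize d by rewrite -(size_map col) -E size_map size_tuple.
  by move: H; rewrite -E Hsw eqxx Hl'.
have Hs : size (map (fun x => inord (col x) : 'I_m) w) == tsize d by rewrite size_map; case/andP: H.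
have Et : map val (Tuple Hs) = map col w.
  by rewrite /= -map_comp; apply: eq_map => x /=; rewrite inordK // col_lt.
have -> : [set g : (tsize d).-tuple 'I_m | legal g &&
      (map (colvar m) (map val g) == map val w)] = [set Tuple Hs].
  apply/setP => g; rewrite !inE map_colvar; apply/idP/idP.
    case/andP => _ /eqP E; apply/eqP; apply: val_inj; apply: (inj_map val_inj).
    by rewrite E Et.
  move/eqP ->; rewrite legal_legs Et eqxx andbT; by case/andP: H.
rewrite cards1 mul1r.
have Hrt := troot_lt d.
case/andP: H => /eqP Hw _.
have Hr : (nth 0%N (map col w) (troot d) < m)%N by rewrite (nth_map ord0) ?Hw // col_lt.
rewrite (bigD1 (Ordinal Hr)) //= eqxx big1 ?addr0 // => c /eqP Hc.
case: eqP => // E; exfalso; apply: Hc; apply: val_inj; by rewrite /= E.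
Qed.
End Words.

Lemma sum_bound a b c (h : nat -> nat) : (forall i, (a <= i < b)%N -> (h i <= c)%N) ->
  (\sum_(a <= i < b) h i <= (b - a) * c)%N.
Proof.
move=> H; rewrite -sum_nat_const_nat big_nat_cond [X in (_ <= X)%N]big_nat_cond.
by apply: leq_sum => i /andP [Hi _]; exact: H.
Qed.

Lemma In_mem (T : eqType) (x : T) s : List.In x s -> x \in s.
Proof. elim: s => [|y s IH] //= H; rewrite inE; case: H => [->|H]; first by rewrite eqxx. by rewrite IH ?orbT. Qed.

Lemma In_choices3 (T : Type) (l : seq T) A1 A2 A3 : List.In l (choices [:: A1; A2; A3]) ->
  exists x1 x2 x3, l = [:: x1; x2; x3] /\ List.In x1 A1 /\ List.In x2 A2 /\ List.In x3 A3.
Proof.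
rewrite /choices /= => H.
have [s [Hs Hl]] := In_flatten H; have [x1 [H1 E1]] := In_map Hs; subst s.
have [t [Ht E]] := In_map Hl; subst l.
clear Hs Hl. have [s [Hs Hl]] := In_flatten Ht; have [x2 [H2 E2]] := In_map Hs; subst s.
have [t' [Ht' E]] := In_map Hl; subst t.
clear Hs Hl. have [s [Hs Hl]] := In_flatten Ht'; have [x3 [H3 E3]] := In_map Hs; subst s.
case: Hl => [E|//]; subst t'. by exists x1, x2, x3.
Qed.

Lemma eval_local (m : nat) (F : fieldType) (vs : seq (ncpoly m F)) i (g : gate m F) :
  (forall j, j \in children g -> (j < i)%N) -> eval_gate (take i vs) g = eval_gate vs g.
Proof.
case: g => //= cs H; congr foldr; apply/eq_in_map => j Hj; by rewrite nth_take ?H.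
Qed.

Lemma shapes_local (m : nat) (F : Type) (ss : seq (seq shape)) i (g : gate m F) :
  (forall j, j \in children g -> (j < i)%N) -> shapes_gate (take i ss) g = shapes_gate ss g.
Proof.
case: g => //= cs H; [congr flatten | congr map; congr choices]; apply/eq_in_map => j Hj;
  by rewrite nth_take ?H.
Qed.

Inductive dummy := Dummy.

Fixpoint sh (k : nat) : shape :=
  if k is k'.+1 then SAdd (SMul [:: sh k'; SLeaf; sh k']) else SLeaf.

Section Circ.
Local Open Scope nat_scope.
Variables (F : fieldType) (m0 d : nat).
Local Notation m := m0.+1.
Definition MM := m * m + m.
Definition qk k := k * MM.
Definition gk k r : gate m F :=
  if r < m * m then GMul [:: qk k + r %% m; r %/ m; qk k + bmod m0 (r %/ m) (r %% m)]
  else GAdd [seq qk k + m + (r - m * m) * m + a | a <- iota 0 m].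
Definition gatef i : gate m F :=
  if i < m then GVar (vc m0 i)
  else if (i - m) %/ MM < d then gk ((i - m) %/ MM) ((i - m) %% MM)
  else GAdd [seq qk d + c | c <- iota 0 m].
Definition NN := qk d + m + 1.
Definition CC := mkseq gatef NN.

Lemma MM_gt0 : 0 < MM. Proof. by rewrite /MM addn_gt0 orbT. Qed.

Lemma gatef_blk k r : k < d -> r < MM -> gatef (m + qk k + r) = gk k r.
Proof.
move=> Hk Hr; rewrite /gatef ifF; last by apply/negbTE; rewrite -leqNgt -addnA leq_addr.
have -> : m + qk k + r - m = k * MM + r by rewrite /qk; lia.
by rewrite divnMDl ?MM_gt0 // modnMDl divn_small // modn_small // addn0 Hk.
Qed.

Lemma gatef_fin : gatef (qk d + m) = GAdd [seq qk d + c | c <- iota 0 m].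
Proof.
rewrite /gatef ifF; last by apply/negbTE; rewrite -leqNgt leq_addl.
by rewrite addnK /qk mulnK ?MM_gt0 // ltnn.
Qed.

Lemma children_gk k r j : r < MM -> j \in children (gk k r) -> j < m + qk k + r.
Proof.
move=> Hr; rewrite /gk; case: ifP => Hm /=.
  have Hdm : r %/ m < m by rewrite ltn_divLR.
  have Hmod := ltn_pmod r (ltn0Sn m0).
  have Hle := leq_mod r m.
  have Hb : bmod m0 (r %/ m) (r %% m) < m by apply: ltn_pmod.
  rewrite !inE => /or3P [] /eqP ->; lia.
move=> Hj; have {Hj} : j \in [seq qk k + m + (r - m * m) * m + a | a <- iota 0 m] := Hj.
case/mapP => a; rewrite mem_iota add0n => /andP [_ Ha] ->.
have Hc : r - m * m < m by move: Hr; rewrite /MM; lia.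
have : (r - m * m).+1 * m <= m * m by rewrite leq_mul2r Hc orbT.
rewrite mulSn; move: Hm; lia.
Qed.

Lemma wfC : wf_circuit CC.
Proof.
split; first by rewrite /CC /NN addn1.
move=> i; rewrite size_mkseq => Hi j; rewrite nth_mkseq //.
rewrite /gatef; case: ifP => // Hm.
case: ifP => Hk.
  have E : i = m + qk ((i - m) %/ MM) + (i - m) %% MM.
    have := divn_eq (i - m) MM; rewrite /qk; lia.
  move=> Hj; have := children_gk (ltn_pmod (i - m) MM_gt0) Hj; by rewrite -E.
case/mapP => c; rewrite mem_iota add0n => /andP [_ Hc] ->.
have : d <= (i - m) %/ MM by rewrite leqNgt Hk.
rewrite leq_divRL ?MM_gt0 // /qk; lia.
Qed.

Lemma size_CC : size CC = NN. Proof. by rewrite size_mkseq. Qed.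

Lemma qk_le k : k <= d -> qk k <= qk d.
Proof. by move=> H; rewrite /qk leq_mul2r H orbT. Qed.

Lemma evalV i : i < NN -> forall w,
  nth (nc0 F) (evals CC) i w = eval_gate (evals CC) (gatef i) w.
Proof.
move=> Hi w.
have -> : evals CC = run (@eval_gate m F) CC by [].
rewrite (run_nth _ _ (GAdd [::])) ?size_CC // eval_local; first by rewrite nth_mkseq.
by move=> j Hj; apply: (wfC.2 i); rewrite ?size_CC.
Qed.

Lemma eval_add (vs : seq (ncpoly m F)) cs w :
  eval_gate vs (GAdd cs) w = (\sum_(j <- cs) nth (nc0 F) vs j w)%R.
Proof. by rewrite /= foldr_add. Qed.

Lemma eval_mul3 (vs : seq (ncpoly m F)) j1 j2 j3 w :
  eval_gate vs (GMul [:: j1; j2; j3]) w =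
  ncmul (nth (nc0 F) vs j1) (ncmul (nth (nc0 F) vs j2) (ncmul (nth (nc0 F) vs j3) (nc1 F))) w.
Proof. by []. Qed.

Lemma sum_iota (R : Type) (idx : R) (op : Monoid.com_law idx) (h : nat -> R) :
  \big[op/idx]_(a <- iota 0 m) h a = \big[op/idx]_(a < m) h a.
Proof. by rewrite -(big_mkord xpredT) /index_iota subn0. Qed.

Lemma val0 c : c < m -> forall w, nth (nc0 F) (evals CC) c w = @ncvar m F (vc m0 c) w.
Proof.
move=> Hc w; rewrite evalV; last by rewrite /NN; lia.
by rewrite /gatef Hc.
Qed.

Lemma valQ k : k <= d -> forall c, c < m -> forall w,
  nth (nc0 F) (evals CC) (qk k + c) w = @Qw F m0 k c w.
Proof.
elim: k => [|k IH] Hk c Hc w.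
  by rewrite /qk mul0n add0n val0 // Qw0.
have Hq := qk_le Hk.
have Ep : qk k.+1 + c = m + qk k + (m * m + c) by rewrite /qk mulSn /MM; lia.
rewrite evalV; last by rewrite /NN; lia.
rewrite Ep gatef_blk //; last by rewrite /MM; lia.
rewrite /gk ifF; last by apply/negbTE; rewrite -leqNgt leq_addr.
rewrite eval_add big_map sum_iota QwS //.
apply: eq_bigr => a _.
have Ha := ltn_ord a.
have Er : qk k + m + (m * m + c - m * m) * m + a = m + qk k + (c * m + a) by rewrite addKn; lia.
have Hcm : c * m + a < m * m.
  have : c.+1 * m <= m * m by rewrite leq_mul2r Hc orbT.
  rewrite mulSn; lia.
have Hq' : qk k.+1 <= qk d by apply: qk_le.
rewrite Er evalV; last by move: Hq'; rewrite /NN /qk mulSn /MM; lia.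
rewrite gatef_blk //; last by rewrite /MM; lia.
rewrite /gk Hcm divnMDl // modnMDl divn_small // modn_small // addn0 eval_mul3.
have Hb : bmod m0 c a < m by apply: ltn_pmod.
apply: ncmul_ext => [u|]; first by rewrite IH // ltnW.
apply: ncmul_ext => [u|]; first by rewrite val0.
apply: ncmul_ext => // u; by rewrite IH // ltnW.
Qed.

Lemma outC w : output CC w = @Pd F m d w.
Proof.
rewrite /output -nth_last.
have -> : (size (evals CC)).-1 = qk d + m.
  have -> : evals CC = run (@eval_gate m F) CC by [].
  by rewrite size_run size_CC /NN addn1.
rewrite evalV; last by rewrite /NN addn1.
rewrite gatef_fin eval_add big_map sum_iota Pd_Qw.
by apply: eq_bigr => c _; rewrite valQ.
Qed.

Local Notation SS := (all_shapes CC).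

Lemma shV i : i < NN -> nth [::] SS i = shapes_gate SS (gatef i).
Proof.
move=> Hi.
have -> : SS = run (@shapes_gate m F) CC by [].
rewrite (run_nth _ _ (GAdd [::])) ?size_CC // shapes_local; first by rewrite nth_mkseq.
by move=> j Hj; apply: (wfC.2 i); rewrite ?size_CC.
Qed.

Lemma sh_add (ss : seq (seq shape)) cs s : List.In s (shapes_gate ss (GAdd cs : gate m F)) ->
  exists j s', List.In j cs /\ List.In s' (nth [::] ss j) /\ s = SAdd s'.
Proof.
move=> /= H; have [t [Ht Hs]] := In_flatten H; have [j [Hj E]] := In_map Ht; subst t.
have [s' [Hs' E]] := In_map Hs; by exists j, s'.
Qed.

Lemma In_iota j : List.In j (iota 0 m) -> j < m.
Proof. by move/In_mem; rewrite mem_iota. Qed.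

Lemma sh0 c : c < m -> forall s, List.In s (nth [::] SS c) -> s = SLeaf.
Proof.
move=> Hc s; rewrite shV; last by rewrite /NN; lia.
by rewrite /gatef Hc /= => -[].
Qed.

Lemma shQ k : k <= d -> forall c, c < m -> forall s,
  List.In s (nth [::] SS (qk k + c)) -> s = sh k.
Proof.
elim: k => [|k IH] Hk c Hc s.
  by rewrite /qk mul0n add0n => /(sh0 Hc).
have Hq := qk_le Hk.
have Ep : qk k.+1 + c = m + qk k + (m * m + c) by rewrite /qk mulSn /MM; lia.
rewrite shV; last by rewrite /NN; lia.
rewrite Ep gatef_blk //; last by rewrite /MM; lia.
rewrite /gk ifF; last by apply/negbTE; rewrite -leqNgt leq_addr.
move/sh_add => [j [s' [Hj [Hs' ->]]]].
have [a [Ha Ej]] := In_map Hj; subst j; have {}Ha := In_iota Ha.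
have Er : qk k + m + (m * m + c - m * m) * m + a = m + qk k + (c * m + a) by rewrite addKn; lia.
have Hcm : c * m + a < m * m.
  have : c.+1 * m <= m * m by rewrite leq_mul2r Hc orbT.
  rewrite mulSn; lia.
have Hq' : qk k.+1 <= qk d by apply: qk_le.
move: Hs'; rewrite Er shV; last by move: Hq'; rewrite /NN /qk mulSn /MM; lia.
rewrite gatef_blk //; last by rewrite /MM; lia.
rewrite /gk Hcm divnMDl // modnMDl divn_small // modn_small // addn0 /=.
have Hb : bmod m0 c a < m by apply: ltn_pmod.
move=> H; have [l [Hl E]] := In_map H; subst s'.
have [x1 [x2 [x3 [-> [H1 [H2 H3]]]]]] := In_choices3 Hl.
by rewrite (IH (ltnW Hk) _ Ha _ H1) (sh0 Hc H2) (IH (ltnW Hk) _ Hb _ H3).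
Qed.

Lemma uptC : UPT CC.
Proof.
have Hfin : forall s, List.In s (parse_shapes CC) -> s = SAdd (sh d).
  move=> s; rewrite /parse_shapes -nth_last.
  have -> : (size SS).-1 = qk d + m.
    have -> : SS = run (@shapes_gate m F) CC by [].
    by rewrite size_run size_CC /NN addn1.
  rewrite shV; last by rewrite /NN addn1.
  rewrite gatef_fin => /sh_add [j [s' [Hj [Hs' ->]]]].
  have [c [Hc Ej]] := In_map Hj; subst j.
  by rewrite (shQ (leqnn d) (In_iota Hc) Hs').
by move=> s t /Hfin -> /Hfin ->.
Qed.

Definition hh i := size (children (gatef i)).

Lemma block_bound k : k < d -> \sum_(m + qk k <= i < m + qk k.+1) hh i <= m * m * 3 + m * m.
Proof.
move=> Hk.
have E1 : m + qk k.+1 = m + qk k + m * m + m by rewrite /qk mulSn /MM; lia.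
rewrite E1 (@big_cat_nat _ _ _ (m + qk k + m * m)) /=; try lia.
apply: leq_add.
  apply: leq_trans (sum_bound (c := 3) _) _; last by rewrite addKn.
  move=> i /andP [H1 H2].
  have -> : i = m + qk k + (i - (m + qk k)) by lia.
  rewrite /hh gatef_blk //; last by rewrite /MM; lia.
  by rewrite /gk ifT //; lia.
apply: leq_trans (sum_bound (c := m) _) _; last by rewrite addKn.
move=> i /andP [H1 H2].
have -> : i = m + qk k + (i - (m + qk k)) by lia.
rewrite /hh gatef_blk //; last by rewrite /MM; lia.
by rewrite /gk ifF ?size_map ?size_iota //; apply/negbTE; lia.
Qed.

Lemma mid_bound k : k <= d -> \sum_(m <= i < m + qk k) hh i <= k * (m * m * 3 + m * m).
Proof.
elim: k => [|k IH] Hk; first by rewrite /qk mul0n addn0 big_geq.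
have Hmk : m + qk k <= m + qk k.+1 by rewrite leq_add2l /qk leq_mul2r leqnSn orbT.
rewrite (@big_cat_nat _ _ _ (m + qk k)) //=; last by rewrite leq_addr.
rewrite mulSn [X in _ <= X]addnC; apply: leq_add; first exact: (IH (ltnW Hk)).
exact: block_bound.
Qed.
Lemma sizeC : 0 < d -> csize CC <= 10 * (m ^ 2 * d).
Proof.
move=> Hd.
rewrite /csize size_CC /CC /mkseq -map_comp sumnE big_map.
have -> : \sum_(i <- iota 0 NN) (fun g => size (children g)) (gatef i) = \sum_(0 <= i < NN) hh i.
  by rewrite /index_iota subn0.
have HN1 : m <= NN by rewrite /NN; lia.
have HN2 : m + qk d <= NN by rewrite /NN; lia.
rewrite (@big_cat_nat _ _ _ m) //= (@big_cat_nat _ _ _ (m + qk d) m) //=; last by rewrite leq_addr.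
have B1 : \sum_(0 <= i < m) hh i <= (m - 0) * 0.
  by apply: sum_bound => i /andP [_ Hi]; rewrite /hh /gatef Hi.
have B3 : \sum_(m + qk d <= i < NN) hh i <= (NN - (m + qk d)) * m.
  apply: sum_bound => i /andP [H1 H2].
  have -> : i = qk d + m by move: H1 H2; rewrite /NN; lia.
  by rewrite /hh gatef_fin /= size_map size_iota.
have E3 : NN - (m + qk d) = 1 by rewrite /NN; lia.
rewrite E3 mul1n muln0 in B3 B1.
have B2 := mid_bound (leqnn d).
have e1 : NN = m * m * d + m * d + m + 1 by rewrite /NN /qk /MM mulnDr [d * (m * m)]mulnC [d * m]mulnC.
have e2 : d * (m * m * 3 + m * m) = 4 * (m * m * d) by rewrite -mulnSr mulnC -mulnA (mulnC 4) mulnA mulnC.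
rewrite e2 in B2.
have h1 : m <= m * m * d by rewrite -mulnA leq_pmulr // muln_gt0 Hd.
have h2 : m * d <= m * m * d by rewrite leq_mul2r leq_pmulr // orbT.
have e3 : m ^ 2 = m * m by rewrite expnS expn1.
rewrite e3; move: B1 B2 B3 h1 h2.
move: (\sum_(0 <= i < m) hh i) (\sum_(m <= i < m + qk d) hh i) (\sum_(m + qk d <= i < NN) hh i).
move=> S1 S2 S3; rewrite e1; move: (m * m * d) (m * d) => P Q; lia.
Qed.
End Circ.

Theorem lemma4p1 (F : fieldType) :
  exists K : nat, forall m d : nat, (0 < m)%N -> (0 < d)%N ->
    exists C : seq (gate m F),
      wf_circuit C /\
      (forall w, output C w = @Pd F m d w) /\
      UPT C /\
      (csize C <= K * (m ^ 2 * d))%N.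
Proof.
exists 10%N => -[//|m0] d _ Hd.
exists (CC F m0 d); split; first exact: wfC.
split; first exact: outC.
split; first exact: uptC.
exact: sizeC.
Qed.
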